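(* Let $\xi=e^{i\pi/5}$. Let $n\ge3$ and let $(n_0,\dots,n_9)\in\mathbb{N}_0^{10}$ with $\sum_{j=0}^9 n_j=n$ and $\sum_{j=0}^9 n_j\xi^j\in\mathbb{R}$. Then there exist $(m_0,\dots,m_9),(k_0,\dots,k_9)\in\mathbb{N}_0^{10}$, neither identically zero, with $m_j+k_j=n_j$ for all $j$, such that $\sum_j m_j\xi^j\in\mathbb{R}$ and $\sum_j k_j\xi^j\in\mathbb{R}$. In other words, no real-valued combination of $n\ge3$ tenth roots of unity (counted with multiplicity) is nontrivial.
   Context: A combination $\sum_j n_j\xi^j$ ($n_j\in\mathbb{N}_0$) with real value is called reducible if its multiset of roots can be split into two nonempty sub-multisets each having real sum, and nontrivial otherwise; $\sum_j n_j$ is its level. *)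

(* Defs.v *)
From Stdlib Require Import Reals List.
From Coquelicot Require Import Coquelicot.
Import ListNotations.

Definition xi : C := (cos (PI / 5), sin (PI / 5)).

Definition nsum10 (f : nat -> nat) : nat :=
  fold_right Nat.add 0%nat (map f (seq 0 10)).

Definition comb10 (c : nat -> nat) : C :=
  fold_right Cplus (RtoC 0) (map (fun j => Cmult (RtoC (INR (c j))) (Cpow xi j)) (seq 0 10)).

Definition is_real (z : C) : Prop := Im z = 0%R.

(* Main.v *)
Require Import Defs.
From Stdlib Require Import Reals List Lra Lia Psatz ZArith.
From Coquelicot Require Import Coquelicot.
Open Scope R_scope.

Lemma cos5_eq : 4 * cos (PI/5) ^ 2 - 2 * cos (PI/5) - 1 = 0.
Proof.
  set (x := PI/5).
  assert (H3 : cos (3*x) = - cos (2*x)).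
  { replace (3*x) with (PI - 2*x) by (unfold x; field). rewrite cos_minus, cos_PI, sin_PI; ring. }
  assert (E3 : cos (3*x) = 4 * cos x ^3 - 3 * cos x).
  { replace (3*x) with (2*x + x) by ring. rewrite cos_plus, cos_2a, sin_2a.
    pose proof (sin2_cos2 x) as H. unfold Rsqr in H.
    apply Rminus_diag_uniq.
    replace ((cos x * cos x - sin x * sin x) * cos x - 2 * sin x * cos x * sin x -
 (4 * cos x ^ 3 - 3 * cos x)) with (-3 * cos x * (sin x * sin x + cos x * cos x - 1)) by ring.
    rewrite H; ring. }
  rewrite cos_2a_cos in H3. rewrite E3 in H3.
  assert (Hc : 0 < cos x).
  { apply cos_gt_0; unfold x; pose proof PI_RGT_0; lra. }
  assert ((cos x + 1) * (4 * cos x ^ 2 - 2 * cos x - 1) = 0) by nra.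
  apply Rmult_integral in H. destruct H; lra.
Qed.

Definition cc := cos (PI/5).
Definition ss := sin (PI/5).
Lemma hc : cc * cc = (2*cc+1)/4.
Proof. pose proof cos5_eq. unfold cc. lra. Qed.
Lemma hs : ss * ss = 1 - cc*cc.
Proof. pose proof (sin2_cos2 (PI/5)). unfold Rsqr in H. unfold ss, cc. lra. Qed.
Lemma xiE : xi = (cc, ss). Proof. reflexivity. Qed.

Ltac step p := 
  match goal with |- Cpow xi (S ?j) = _ =>
   change (Cpow xi (S j)) with (xi * Cpow xi j)%C; rewrite p, xiE; unfold Cmult; simpl fst; simpl snd;
   pose proof hc; pose proof hs;
   assert (cc*cc*cc = cc*((2*cc+1)/4)) by (rewrite hc; ring);
   assert (ss*ss*cc = (1 - cc*cc)*cc) by (rewrite hs; ring);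
   f_equal; nra end.

Lemma p0 : Cpow xi 0 = (1, 0). Proof. reflexivity. Qed.
Lemma p1 : Cpow xi 1 = (cc, ss). Proof. step p0. Qed.
Lemma p2 : Cpow xi 2 = (cc - 1/2, 2*cc*ss). Proof. step p1. Qed.
Lemma p3 : Cpow xi 3 = (1/2 - cc, 2*cc*ss). Proof. step p2. Qed.
Lemma p4 : Cpow xi 4 = (-cc, ss). Proof. step p3. Qed.
Lemma p5 : Cpow xi 5 = (-1, 0). Proof. step p4. Qed.
Lemma p6 : Cpow xi 6 = (-cc, -ss). Proof. step p5. Qed.
Lemma p7 : Cpow xi 7 = (1/2 - cc, -(2*cc*ss)). Proof. step p6. Qed.
Lemma p8 : Cpow xi 8 = (cc - 1/2, -(2*cc*ss)). Proof. step p7. Qed.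
Lemma p9 : Cpow xi 9 = (cc, -ss). Proof. step p8. Qed.

Lemma Im_comb (d : nat -> nat) : Im (comb10 d) =
  ss * ((INR (d 1%nat) + INR (d 4%nat) - INR (d 6%nat) - INR (d 9%nat))
       + 2*cc*(INR (d 2%nat) + INR (d 3%nat) - INR (d 7%nat) - INR (d 8%nat))).
Proof.
  unfold comb10. cbn [seq map fold_right].
  rewrite p0, p1, p2, p3, p4, p5, p6, p7, p8, p9.
  unfold Im, Cplus, Cmult, RtoC. simpl. ring.
Qed.

Lemma zdesc : forall N (a b : Z), (Z.abs a + Z.abs b <= Z.of_nat N)%Z ->
  (a*a + a*b - b*b = 0)%Z -> a = 0%Z /\ b = 0%Z.
Proof.
  induction N; intros a b Hn H. { lia. }
  destruct (Z.Even_or_Odd a) as [[x Hx]|[x Hx]];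
  destruct (Z.Even_or_Odd b) as [[y Hy]|[y Hy]]; subst.
  - assert (E: (x*x + x*y - y*y = 0)%Z) by nia.
    destruct (IHN x y); [lia|exact E|lia].
  - exfalso. assert (E: ((2*x)*(2*x) + (2*x)*(2*y+1) - (2*y+1)*(2*y+1) =
       2*(2*x*x + 2*x*y + x - 2*y*y - 2*y - 1) + 1)%Z) by ring. lia.
  - exfalso. assert (E: ((2*x+1)*(2*x+1) + (2*x+1)*(2*y) - (2*y)*(2*y) =
       2*(2*x*x + 2*x + 2*x*y + y - 2*y*y) + 1)%Z) by ring. lia.
  - exfalso. assert (E: ((2*x+1)*(2*x+1) + (2*x+1)*(2*y+1) - (2*y+1)*(2*y+1) =
       2*(2*x*x + 2*x + 2*x*y + x + y - 2*y*y - 2*y) + 1)%Z) by ring. lia.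
Qed.

Lemma real_iff (d : nat -> nat) : is_real (comb10 d) <->
  (d 1 + d 4 = d 6 + d 9 /\ d 2 + d 3 = d 7 + d 8)%nat.
Proof.
  unfold is_real. rewrite Im_comb. split.
  - intro H.
    assert (Hs : 0 < ss).
    { unfold ss. apply sin_gt_0; pose proof PI_RGT_0; lra. }
    set (a := (Z.of_nat (d 1%nat) + Z.of_nat (d 4%nat) - Z.of_nat (d 6%nat) - Z.of_nat (d 9%nat))%Z).
    set (b := (Z.of_nat (d 2%nat) + Z.of_nat (d 3%nat) - Z.of_nat (d 7%nat) - Z.of_nat (d 8%nat))%Z).
    assert (HA : IZR a + 2*cc*IZR b = 0).
    { unfold a, b. rewrite !minus_IZR, !plus_IZR, <- !INR_IZR_INZ.
      apply Rmult_eq_reg_l with ss; [|lra]. rewrite Rmult_0_r, <- H. ring. }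
    assert (Hq : IZR (a*a + a*b - b*b) = 0).
    { rewrite minus_IZR, plus_IZR, !mult_IZR.
      replace (IZR a) with (-(2*cc*IZR b)) by lra.
      pose proof hc.
      replace (- (2 * cc * IZR b) * - (2 * cc * IZR b) + - (2 * cc * IZR b) * IZR b - IZR b * IZR b)
        with (IZR b * IZR b * (4 * (cc*cc) - 2*cc - 1)) by ring.
      rewrite H0. field. }
    apply eq_IZR in Hq.
    destruct (zdesc (Z.abs_nat a + Z.abs_nat b) a b) as [Ha Hb]; [lia|exact Hq|].
    unfold a, b in *. lia.
  - intros [H1 H2].
    replace (INR (d 1%nat) + INR (d 4%nat) - INR (d 6%nat) - INR (d 9%nat)) with
      (INR (d 1%nat + d 4%nat) - INR (d 6%nat + d 9%nat)) by (rewrite !plus_INR; ring).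
    replace (INR (d 2%nat) + INR (d 3%nat) - INR (d 7%nat) - INR (d 8%nat)) with
      (INR (d 2%nat + d 3%nat) - INR (d 7%nat + d 8%nat)) by (rewrite !plus_INR; ring).
    rewrite H1, H2. ring.
Qed.

Lemma nz10 (f : nat -> nat) : (f 0 + f 1 + f 2 + f 3 + f 4 + f 5 + f 6 + f 7 + f 8 + f 9 <> 0)%nat ->
  exists j, (j < 10)%nat /\ f j <> 0%nat.
Proof.
  intro H.
  destruct (Nat.eq_dec (f 0%nat) 0); [|exists 0%nat; split; [lia|auto]].
  destruct (Nat.eq_dec (f 1%nat) 0); [|exists 1%nat; split; [lia|auto]].
  destruct (Nat.eq_dec (f 2%nat) 0); [|exists 2%nat; split; [lia|auto]].
  destruct (Nat.eq_dec (f 3%nat) 0); [|exists 3%nat; split; [lia|auto]].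
  destruct (Nat.eq_dec (f 4%nat) 0); [|exists 4%nat; split; [lia|auto]].
  destruct (Nat.eq_dec (f 5%nat) 0); [|exists 5%nat; split; [lia|auto]].
  destruct (Nat.eq_dec (f 6%nat) 0); [|exists 6%nat; split; [lia|auto]].
  destruct (Nat.eq_dec (f 7%nat) 0); [|exists 7%nat; split; [lia|auto]].
  destruct (Nat.eq_dec (f 8%nat) 0); [|exists 8%nat; split; [lia|auto]].
  destruct (Nat.eq_dec (f 9%nat) 0); [|exists 9%nat; split; [lia|auto]].
  lia.
Qed.

Lemma split_ok (c m : nat -> nat) :
  (forall j, (j < 10)%nat -> (m j <= c j)%nat) ->
  (m 1 + m 4 = m 6 + m 9 /\ m 2 + m 3 = m 7 + m 8)%nat ->
  (c 1 + c 4 = c 6 + c 9 /\ c 2 + c 3 = c 7 + c 8)%nat ->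
  (m 0 + m 1 + m 2 + m 3 + m 4 + m 5 + m 6 + m 7 + m 8 + m 9 <> 0)%nat ->
  (m 0 + m 1 + m 2 + m 3 + m 4 + m 5 + m 6 + m 7 + m 8 + m 9 <
   c 0 + c 1 + c 2 + c 3 + c 4 + c 5 + c 6 + c 7 + c 8 + c 9)%nat ->
  exists m k : nat -> nat,
      (exists j, (j < 10)%nat /\ m j <> 0%nat) /\
      (exists j, (j < 10)%nat /\ k j <> 0%nat) /\
      (forall j, (j < 10)%nat -> (m j + k j)%nat = c j) /\
      is_real (comb10 m) /\ is_real (comb10 k).
Proof.
  intros Hle Hm Hc H1 H2.
  pose proof (Hle 0%nat ltac:(lia)); pose proof (Hle 1%nat ltac:(lia));
  pose proof (Hle 2%nat ltac:(lia)); pose proof (Hle 3%nat ltac:(lia));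
  pose proof (Hle 4%nat ltac:(lia)); pose proof (Hle 5%nat ltac:(lia));
  pose proof (Hle 6%nat ltac:(lia)); pose proof (Hle 7%nat ltac:(lia));
  pose proof (Hle 8%nat ltac:(lia)); pose proof (Hle 9%nat ltac:(lia)).
  exists m, (fun j => c j - m j)%nat. split; [apply nz10; exact H1|].
  split; [apply nz10; lia|].
  split; [intros j Hj; specialize (Hle j Hj); lia|].
  split; apply real_iff; lia.
Qed.

Definition e1 (i : nat) : nat -> nat := fun t => if Nat.eqb t i then 1%nat else 0%nat.
Definition e2 (i j : nat) : nat -> nat := fun t => (e1 i t + e1 j t)%nat.

Ltac fin10 := let j := fresh "j" in let Hj := fresh "Hj" in
  intros j Hj; do 10 (destruct j as [|j]; [cbv [e1 e2 Nat.eqb]; lia|]); lia.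

Ltac so m := apply (split_ok _ m); [fin10|cbv [e1 e2 Nat.eqb]; lia ..].

Theorem theorem6p6 :
  forall (n : nat) (c : nat -> nat),
    (3 <= n)%nat ->
    nsum10 c = n ->
    is_real (comb10 c) ->
    exists m k : nat -> nat,
      (exists j, (j < 10)%nat /\ m j <> 0%nat) /\
      (exists j, (j < 10)%nat /\ k j <> 0%nat) /\
      (forall j, (j < 10)%nat -> (m j + k j)%nat = c j) /\
      is_real (comb10 m) /\ is_real (comb10 k).
Proof.
  intros n c Hn Hs Hr. apply real_iff in Hr. unfold nsum10 in Hs; simpl in Hs.
  destruct (Nat.eq_dec (c 0%nat) 0); [|apply (split_ok c (e1 0)); [fin10|cbv [e1 e2 Nat.eqb]; lia ..]].
  destruct (Nat.eq_dec (c 5%nat) 0); [|apply (split_ok c (e1 5)); [fin10|cbv [e1 e2 Nat.eqb]; lia ..]].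
  destruct (Nat.eq_dec (c 1%nat) 0); [|destruct (Nat.eq_dec (c 6%nat) 0);
     [so (e2 1 9)|so (e2 1 6)]].
  destruct (Nat.eq_dec (c 4%nat) 0); [|destruct (Nat.eq_dec (c 6%nat) 0);
     [so (e2 4 9)|so (e2 4 6)]].
  destruct (Nat.eq_dec (c 2%nat) 0); [|destruct (Nat.eq_dec (c 7%nat) 0);
     [so (e2 2 8)|so (e2 2 7)]].
  destruct (Nat.eq_dec (c 3%nat) 0); [|destruct (Nat.eq_dec (c 7%nat) 0);
     [so (e2 3 8)|so (e2 3 7)]].
  lia.
Qed.
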